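(* Let $Q$ be a finite right Bol loop of odd order and let $H$ be a subgroup of $N_\lambda(Q)$ of order $3$. Suppose that $T_x(H)\subseteq H$ for all $x\in Q$. Then $H\subseteq C(Q)$, i.e. every element of $H$ commutes with every element of $Q$.
   Context: A loop is a set with a binary multiplication and a two-sided identity $1$ in which all left and right translations $L_x(y)=xy$, $R_x(y)=yx$ are bijections. A loop is right Bol if it satisfies $((xy)z)y=x((yz)y)$ for all $x,y,z$. For $x\in Q$, $T_x=L_x^{-1}R_x$, so $T_x(y)=x\backslash(yx)$. The left nucleus is $N_\lambda(Q)=\{x\in Q: x\cdot yz=xy\cdot z \text{ for all } y,z\in Q\}$. The commutant is $C(Q)=\{x\in Q: xy=yx\text{ for all }y\in Q\}$. *)

(* Defs.v *)
From mathcomp Require Import all_boot.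
Set Implicit Arguments. Unset Strict Implicit. Unset Printing Implicit Defensive.

(* A finite loop: a finite type with a binary multiplication, a two-sided
   identity, and bijective left and right translations (on a finite type
   bijectivity = injectivity). *)
Record finLoop := FinLoop {
  lcar :> finType;
  lmul : lcar -> lcar -> lcar;
  lone : lcar;
  lmul1x : forall x, lmul lone x = x;
  lmulx1 : forall x, lmul x lone = x;
  lL_inj : forall x, injective (lmul x);
  lR_inj : forall x, injective (fun y => lmul y x)
}.

Section LoopDefs.
Variable Q : finLoop.
Local Notation "x * y" := (lmul x y).

Definition right_Bol := forall x y z : Q, ((x * y) * z) * y = x * ((y * z) * y).

Definition ldiv (x y : Q) : Q := invF (@lL_inj Q x) y.

Definition Tmap (x : Q) (y : Q) : Q := ldiv x (y * x).

Definition lnucleus : {set Q} :=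
  [set a | [forall y, forall z, a * (y * z) == (a * y) * z]].

Definition commutant : {set Q} := [set a | [forall y, a * y == y * a]].

Definition subloop (H : {set Q}) :=
  lone Q \in H /\
  (forall a b, a \in H -> b \in H -> a * b \in H) /\
  (forall a b, a \in H -> b \in H -> ldiv a b \in H).
End LoopDefs.

(* Main.v *)
Require Import Defs.
From mathcomp Require Import all_boot.

Section Aux.
Variable Q : finLoop.
Local Notation m := (@lmul Q).
Local Notation e := (lone Q).
Hypothesis bol : right_Bol Q.
Variable h : Q.
Hypothesis hN : forall y z, m h (m y z) = m (m h y) z.
Hypothesis h3 : m (m h h) h = e.
Hypothesis h1 : h != e.
Hypothesis dich : forall x, m h x = m x h \/ m h x = m x (m h h).

Lemma RA x : m (m x h) h = m x (m h h).
Proof. by have := bol x h e; rewrite !lmulx1. Qed.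

Lemma R3 x : m (m x (m h h)) h = x.
Proof. by rewrite -RA bol h3 lmulx1. Qed.

Lemma R3' x : m (m x h) (m h h) = x.
Proof. by rewrite -RA bol h3 lmulx1. Qed.

Lemma hh_neq : m h h <> h.
Proof.
move=> E; move/eqP: h1; apply; apply: (@lL_inj Q h); by rewrite E lmulx1.
Qed.

Lemma key b w : m h b = m b (m h h) ->
  (m h w = m w h <-> m h (m w b) <> m (m w b) h).
Proof.
move=> hb.
have E : m (m w b) h = m (m w (m h h)) b.
  by have := bol (m w (m h h)) h b; rewrite R3 hb R3.
have ne u : m h u = m u (m h h) -> m h u <> m u h.
  move=> -> /(@lL_inj Q u) /hh_neq //.
split.
- move=> hw.
  have W2 : m w (m h h) = m (m h h) w.
    by rewrite -RA -hw -hN -hw hN.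
  rewrite E W2 -hN -hN -hN => F.
  have F2 := lL_inj F.
  move/eqP: h1; apply; apply: (@lR_inj Q (m w b)); by rewrite /= -F2 lmul1x.
- move=> NE; case: (dich w) => // hw; exfalso; apply: NE.
  by rewrite hN hw E.
Qed.
End Aux.

Lemma three (T : finType) (H : {set T}) a b c : #|H| = 3 ->
  a \in H -> b \in H -> c \in H -> a != b -> a != c -> b != c ->
  forall x, x \in H -> x = a \/ x = b \/ x = c.
Proof.
move=> cH aH bH cH' ab ac bc.
have S : (a |: (b |: [set c])) \subset H.
  by apply/subsetP=> x; rewrite !inE  => /orP[|/orP[]] /eqP ->.
have C : #|(a |: (b |: [set c]))| = 3.
  rewrite !cardsU1 cards1 !inE negb_or ab ac bc //.
have E : (a |: (b |: [set c])) = H by apply/eqP; rewrite eqEcard S C cH.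
move=> x; rewrite -E !inE  => /orP[|/orP[]] /eqP ->; tauto.
Qed.

Lemma other (T : finType) (H : {set T}) a b : #|H| = 3 ->
  exists k, [/\ k \in H, k != a & k != b].
Proof.
move=> cH.
case: (boolP (H \subset [set a; b])) => [S|].
  have := subset_leq_card S; rewrite cards2 cH; by case: (a != b).
case/subsetPn=> k kH; rewrite !inE negb_or => /andP [ka kb].
by exists k.
Qed.

Theorem lemma4p10 (Q : finLoop) (H : {set Q}) :
  right_Bol Q -> odd #|Q| ->
  subloop H -> H \subset lnucleus Q -> #|H| = 3 ->
  (forall x h, h \in H -> Tmap x h \in H) ->
  H \subset commutant Q.
Proof.
move=> bol odQ [H1 [Hm _]] HN cH HT.
have [h [hH hne _]] := @other _ H (lone Q) (lone Q) cH.
have hN : forall y z, lmul h (lmul y z) = lmul (lmul h y) z.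
  by move=> y z; move/subsetP: HN => /(_ h hH); rewrite inE =>
    /forallP /(_ y) /forallP /(_ z) /eqP.
have h2H : lmul h h \in H by apply: Hm.
have h2h : lmul h h != h by apply/eqP; exact: (@hh_neq Q h hne).
have h2e : lmul h h != lone Q.
  apply/eqP=> E.
  have [k [kH ke kh]] := @other _ H (lone Q) h cH.
  have := @three _ H _ _ _ cH H1 hH kH ltac:(by rewrite eq_sym) ltac:(by rewrite eq_sym) ltac:(by rewrite eq_sym) _ (Hm _ _ hH kH).
  case=> [F|[F|F]].
  - by move/eqP: kh; apply; apply: (@lL_inj Q h); rewrite F E.
  - by move/eqP: ke; apply; apply: (@lL_inj Q h); rewrite F lmulx1.
  - by move/eqP: hne; apply; apply: (@lR_inj Q k); rewrite /= F lmul1x.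
have h3 : lmul (lmul h h) h = lone Q.
  have := @three _ H _ _ _ cH H1 hH h2H ltac:(by rewrite eq_sym) ltac:(by rewrite eq_sym) ltac:(by rewrite eq_sym)
    _ (Hm _ _ h2H hH).
  rewrite -hN; case=> [//|[F|F]].
  - by exfalso; move/eqP: h2e; apply; apply: (@lL_inj Q h); rewrite F lmulx1.
  - by exfalso; move/eqP: h2h; apply; apply: (@lL_inj Q h).
have dich : forall x, lmul h x = lmul x h \/ lmul h x = lmul x (lmul h h).
  move=> x; have tH := HT x h hH.
  have xt : lmul x (Tmap x h) = lmul h x by rewrite /Tmap /ldiv f_invF.
  have := @three _ H _ _ _ cH H1 hH h2H ltac:(by rewrite eq_sym) ltac:(by rewrite eq_sym) ltac:(by rewrite eq_sym) _ tH.
  case=> [F|[F|F]]; rewrite -xt F; [|by left|by right].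
  move: xt; rewrite F lmulx1 => xt.
  by exfalso; move/eqP: hne; apply; apply: (@lR_inj Q x); rewrite /= -xt lmul1x.
have comm : forall x, lmul h x = lmul x h.
  case: (boolP [forall x, lmul h x == lmul x h]) => [/forallP A x|].
    exact/eqP/A.
  rewrite negb_forall => /existsP [b /eqP nb].
  have hb : lmul h b = lmul b (lmul h h) by case: (dich b).
  pose A := [set x | lmul h x == lmul x h].
  have P : (fun w => lmul w b) @^-1: A = ~: A.
    apply/setP=> w; rewrite !inE.
    have K := @key Q bol h hN h3 hne dich b w hb.
    apply/idP/idP.
    - move=> /eqP F; apply/negP => /eqP G; exact: (proj1 K G F).
    - move=> G; case: eqP => // F; by rewrite (proj2 K F) eqxx in G.
  have := card_preimset A (@lR_inj Q b); rewrite P => C.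
  have := cardsC A; rewrite -C addnn => D.
  by move: odQ; rewrite -D odd_double.
apply/subsetP=> a aH; rewrite inE; apply/forallP=> y; apply/eqP.
have := @three _ H _ _ _ cH H1 hH h2H ltac:(by rewrite eq_sym) ltac:(by rewrite eq_sym) ltac:(by rewrite eq_sym) _ aH.
case=> [->|[->|->]]; first by rewrite lmul1x lmulx1.
  exact: comm.
by rewrite -hN (comm y) hN (comm y) (@RA Q bol h).
Qed.
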